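(* Let $g$ be a non-constant entire function of finite order $\rho\ge0$ whose Taylor coefficients are all non-negative, and let $f=e^g$. Let $(X_t)_{t\ge0}$ be the Khinchin family of $f$ and $\breve{X}_t$ its normalization, and let $Z$ be a standard normal random variable. Then $$\lim_{t\to\infty}\mathbf{E}(\breve{X}_t^m)=\mathbf{E}(Z^m)\quad\text{for every integer } m\ge1.$$
   Context: Such $f=\sum_n a_nz^n$ is entire, with $a_n\ge0$ and $a_0=e^{g(0)}>0$. For $t>0$, $X_t$ is the random variable with $\mathbf{P}(X_t=n)=a_nt^n/f(t)$, $n\ge0$. With $m_f(t)=\mathbf{E}(X_t)$ and $\sigma_f^2(t)=\mathbf{V}(X_t)>0$, the normalization is $\breve{X}_t=(X_t-m_f(t))/\sigma_f(t)$. The order of an entire function $g$ is $\limsup_{r\to\infty}\frac{\ln\ln\max_{|z|=r}|g(z)|}{\ln r}$. *)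

(* Defs.v *)
From Stdlib Require Import Reals.
From Coquelicot Require Import Coquelicot.
Open Scope R_scope.

(** The entire function g with (real) Taylor coefficients [b], evaluated at a
    complex point: [is_pseries (fun n => RtoC (b n)) z l] means g(z) = l. *)

Definition max_modulus (b : nat -> R) (r : R) : R :=
  real (Lub_Rbar (fun y => exists (z : C) (l : C),
          Cmod z = r /\ is_pseries (fun n => RtoC (b n)) z l /\ y = Cmod l)).

(** g has finite order: limsup_{r->oo} ln ln M_g(r) / ln r < +oo,
    i.e. ln ln M_g(r) / ln r is eventually bounded above. *)
Definition finite_order (b : nat -> R) : Prop :=
  exists (K R0 : R), 0 < R0 /\ forall r, R0 <= r ->
    ln (ln (max_modulus b r)) / ln r <= K.

Definition khinchin_pmf (a : nat -> R) (t : R) (n : nat) : R :=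
  a n * t ^ n / PSeries a t.

Definition kmean (a : nat -> R) (t : R) : R :=
  Series (fun n => INR n * khinchin_pmf a t n).

Definition kvar (a : nat -> R) (t : R) : R :=
  Series (fun n => (INR n - kmean a t) ^ 2 * khinchin_pmf a t n).

Definition knorm_moment (a : nat -> R) (t : R) (m : nat) : R :=
  Series (fun n => ((INR n - kmean a t) / sqrt (kvar a t)) ^ m
                   * khinchin_pmf a t n).

Definition std_normal_density (x : R) : R := exp (- x ^ 2 / 2) / sqrt (2 * PI).

(* Main.v *)
Require Import Defs.
From Stdlib Require Import Reals Lra Lia ZArith Classical.
From Coquelicot Require Import Coquelicot.
Open Scope R_scope.

Definition cj (c : nat -> R) (j : nat) (n : nat) : R := INR n ^ j * c n.
Definition Sj (c : nat -> R) (j : nat) (t : R) : R := PSeries (cj c j) t.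

Lemma cj_S c j : forall n, cj c (S j) n = PS_incr_1 (PS_derive (cj c j)) n.
Proof.
  intros [|n]; unfold cj, PS_derive, PS_incr_1.
  - change (INR 0 ^ S j * c 0%nat = 0). simpl. ring.
  - cbn [pow]. ring.
Qed.

Lemma radius_cj c j : CV_radius c = p_infty -> CV_radius (cj c j) = p_infty.
Proof.
  intro H. induction j.
  - rewrite <- H. apply CV_radius_ext. intro n; unfold cj; simpl; ring.
  - rewrite (CV_radius_ext _ _ (cj_S c j)), CV_radius_incr_1, CV_radius_derive; auto.
Qed.

Lemma Sj_S c j t : Sj c (S j) t = t * PSeries (PS_derive (cj c j)) t.
Proof.
  unfold Sj. rewrite (PSeries_ext _ _ t (cj_S c j)). apply PSeries_incr_1.
Qed.

Lemma derive_Sj c j t : CV_radius c = p_infty -> t <> 0 ->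
  is_derive (Sj c j) t (Sj c (S j) t / t).
Proof.
  intros H Ht. rewrite Sj_S. replace (t * PSeries (PS_derive (cj c j)) t / t)
    with (PSeries (PS_derive (cj c j)) t) by (field; auto).
  apply is_derive_PSeries. rewrite radius_cj; auto. exact I.
Qed.

Lemma is_series_Sj c j t : CV_radius c = p_infty ->
  is_series (fun n => INR n ^ j * c n * t ^ n) (Sj c j t).
Proof.
  intro H. unfold Sj. 
  assert (ex_pseries (cj c j) t) as E.
  { apply CV_radius_inside. rewrite radius_cj; auto. exact I. }
  pose proof (PSeries_correct _ _ E) as P. unfold is_pseries in P.
  eapply is_series_ext; [|exact P]. intro n. unfold cj.
  rewrite pow_n_pow. change (t ^ n * (INR n ^ j * c n) = INR n ^ j * c n * t ^ n). ring.
Qed.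

Lemma locally_pos t : 0 < t -> locally t (fun s => 0 < s).
Proof.
  intro Ht. exists (mkposreal t Ht). intros s Hs.
  change (Rabs (s - t) < t) in Hs. apply Rabs_def2 in Hs. lra.
Qed.

Definition wt (a : nat -> R) (n : nat) (t : R) := a n * t ^ n.
Definition SH (a : nat -> R) (H : nat -> R -> R) (t : R) :=
  Series (fun n => H n t * wt a n t).

Inductive PN : (nat -> R -> R) -> (nat -> R -> R) -> Prop :=
| PN_base : forall (c c' : R -> R) (i : nat),
    (forall t, 0 < t -> is_derive c t (c' t)) ->
    PN (fun n t => c t * INR n ^ i) (fun n t => c' t * INR n ^ i)
| PN_plus : forall H H' K K', PN H H' -> PN K K' ->
    PN (fun n t => H n t + K n t) (fun n t => H' n t + K' n t)
| PN_ext : forall H H' K K', PN H H' ->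
    (forall n t, 0 < t -> H n t = K n t /\ H' n t = K' n t) -> PN K K'.

Lemma base_series a c i t : CV_radius a = p_infty ->
  is_series (fun n => c * INR n ^ i * wt a n t) (c * Sj a i t).
Proof.
  intro Ra. pose proof (is_series_scal_l c _ _ (is_series_Sj a i t Ra)) as P.
  eapply is_series_ext; [|exact P]. intro n. unfold wt. change (c * (INR n ^ i * a n * t ^ n) = c * INR n ^ i * (a n * t ^ n)). ring.
Qed.

Definition PNprop a H H' t :=
  ex_series (fun n => H n t * wt a n t) /\
  ex_series (fun n => H' n t * wt a n t) /\
  ex_series (fun n => INR n * H n t * wt a n t) /\
  is_derive (SH a H) t (SH a H' t + SH a (fun n t => INR n * H n t) t / t).

Lemma PN_series a H H' : CV_radius a = p_infty -> PN H H' ->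
  forall t, 0 < t -> PNprop a H H' t.
Proof.
  intros Ra P. induction P as [c c' i Hc|H H' K K' P1 IH1 P2 IH2|H H' K K' P IH HK].
  - intros t Ht. unfold PNprop.
    assert (E : forall (d : R -> R) i s, SH a (fun n t => d t * INR n ^ i) s = d s * Sj a i s).
    { intros d i0 s. unfold SH. apply is_series_unique. apply base_series; auto. }
    split; [eexists; apply base_series; auto|].
    split; [eexists; apply base_series; auto|].
    split.
    { eexists. eapply is_series_ext; [|apply (base_series a (c t) (S i) t Ra)].
      intro n. simpl. ring. }
    assert (E2 : SH a (fun n t => INR n * (c t * INR n ^ i)) t = c t * Sj a (S i) t).
    { unfold SH. apply is_series_unique.
      eapply is_series_ext; [|apply (base_series a (c t) (S i) t Ra)].
      intro n. simpl. ring. }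
    rewrite E, E2.
    apply is_derive_ext with (f := fun s => c s * Sj a i s).
    { intro s. rewrite E. reflexivity. }
    replace (c' t * Sj a i t + c t * Sj a (S i) t / t) with
      (plus (mult (c' t) (Sj a i t)) (mult (c t) (Sj a (S i) t / t))).
    2: { unfold plus, mult; simpl. field. lra. }
    apply (is_derive_mult c (Sj a i)).
    + apply Hc; auto.
    + apply derive_Sj; auto. lra.
    + intros; apply Rmult_comm.
  - intros t Ht. destruct (IH1 t Ht) as (A1 & A2 & A3 & A4).
    destruct (IH2 t Ht) as (B1 & B2 & B3 & B4). unfold PNprop.
    split. { eapply ex_series_ext; [|apply (ex_series_plus _ _ A1 B1)]. intro n; simpl. change (H n t * wt a n t + K n t * wt a n t = (H n t + K n t) * wt a n t). ring. }
    split. { eapply ex_series_ext; [|apply (ex_series_plus _ _ A2 B2)]. intro n; simpl. change (H' n t * wt a n t + K' n t * wt a n t = (H' n t + K' n t) * wt a n t). ring. }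
    split. { eapply ex_series_ext; [|apply (ex_series_plus _ _ A3 B3)]. intro n; simpl. change (INR n * H n t * wt a n t + INR n * K n t * wt a n t = INR n * (H n t + K n t) * wt a n t). ring. }
    assert (SP : forall (U V : nat -> R -> R) s, ex_series (fun n => U n s * wt a n s) -> ex_series (fun n => V n s * wt a n s) ->
       SH a (fun n t => U n t + V n t) s = SH a U s + SH a V s).
    { intros U V s EU EV. unfold SH. rewrite <- Series_plus; auto. apply Series_ext. intro; ring. }
    rewrite SP by auto.
    assert (SP2 : SH a (fun n t => INR n * (H n t + K n t)) t = SH a (fun n t => INR n * H n t + INR n * K n t) t).
    { unfold SH. apply Series_ext. intro; ring. }
    rewrite SP2, (SP (fun n t => INR n * H n t) (fun n t => INR n * K n t)) by auto.
    apply is_derive_ext_loc with (f := fun s => SH a H s + SH a K s).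
    { apply filter_imp with (2 := locally_pos t Ht). intros s Hs.
      destruct (IH1 s Hs) as (C1 & _). destruct (IH2 s Hs) as (D1 & _).
      rewrite SP; auto. }
    replace (SH a H' t + SH a K' t + (SH a (fun n t => INR n * H n t) t + SH a (fun n t => INR n * K n t) t) / t)
      with (plus (SH a H' t + SH a (fun n t => INR n * H n t) t / t) (SH a K' t + SH a (fun n t => INR n * K n t) t / t)).
    2: { unfold plus; simpl. field. lra. }
    apply (is_derive_plus (SH a H) (SH a K)); auto.
  - intros t Ht. destruct (IH t Ht) as (A1 & A2 & A3 & A4). unfold PNprop.
    assert (EQ : forall (U V : nat -> R -> R) s, (forall n, U n s = V n s) -> SH a U s = SH a V s).
    { intros U V s HUV. unfold SH. apply Series_ext. intro n. rewrite HUV. auto. }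
    split. { eapply ex_series_ext; [|exact A1]. intro n; simpl. rewrite (proj1 (HK n t Ht)). auto. }
    split. { eapply ex_series_ext; [|exact A2]. intro n; simpl. rewrite (proj2 (HK n t Ht)). auto. }
    split. { eapply ex_series_ext; [|exact A3]. intro n; simpl. rewrite (proj1 (HK n t Ht)). auto. }
    rewrite <- (EQ H' K' t) by (intro n; apply (HK n t Ht)).
    rewrite <- (EQ (fun n t => INR n * H n t) (fun n t => INR n * K n t) t) by (intro n; rewrite (proj1 (HK n t Ht)); auto).
    apply is_derive_ext_loc with (f := SH a H); auto.
    apply filter_imp with (2 := locally_pos t Ht). intros s Hs.
    apply EQ. intro n. apply (HK n s Hs).
Qed.

Lemma is_derive_mult_R (f g : R -> R) x df dg :
  is_derive f x df -> is_derive g x dg -> is_derive (fun y => f y * g y) x (df * g x + f x * dg).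
Proof.
  intros H1 H2. apply (is_derive_mult f g x df dg H1 H2). intros; apply Rmult_comm.
Qed.

Lemma PN_mul (m m' : R -> R) H H' :
  (forall t, 0 < t -> is_derive m t (m' t)) -> PN H H' ->
  PN (fun n t => (INR n - m t) * H n t) (fun n t => - m' t * H n t + (INR n - m t) * H' n t).
Proof.
  intros Hm P. induction P as [c c' i Hc|H H' K K' P1 IH1 P2 IH2|H H' K K' P IH HK].
  - eapply PN_ext.
    + apply PN_plus. apply (PN_base c c' (S i) Hc).
      apply (PN_base (fun t => - m t * c t) (fun t => - (m' t * c t + m t * c' t)) i).
      intros t Ht. 
      replace (- (m' t * c t + m t * c' t)) with (- m' t * c t + - m t * c' t) by ring.
      apply (is_derive_mult_R (fun y => - m y) c); auto. apply (is_derive_opp m t (m' t)). auto.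
    + intros n t Ht. simpl. split; ring.
  - eapply PN_ext. apply PN_plus; [exact IH1|exact IH2].
    intros n t Ht; simpl; split; ring.
  - eapply PN_ext. exact IH. intros n t Ht. destruct (HK n t Ht) as [E1 E2].
    rewrite E1, E2. split; reflexivity.
Qed.

Definition Hk (m : R -> R) k n t := (INR n - m t) ^ k.
Definition H'k (m m' : R -> R) k n t := - INR k * m' t * (INR n - m t) ^ (pred k).

Lemma PN_Hk m m' k : (forall t, 0 < t -> is_derive m t (m' t)) -> PN (Hk m k) (H'k m m' k).
Proof.
  intro Hm. induction k.
  - eapply PN_ext. apply (PN_base (fun _ => 1) (fun _ => 0) 0).
    intros; apply (is_derive_const (K:=R_AbsRing) (V:=R_NormedModule) 1).
    intros n t Ht. unfold Hk, H'k. simpl. split; ring.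
  - eapply PN_ext. apply (PN_mul m m' _ _ Hm IHk).
    intros n t Ht. unfold Hk, H'k. split.
    + simpl. ring.
    + destruct k. simpl. ring. rewrite (S_INR (S k)). simpl pred. change ((INR n - m t) ^ S k) with ((INR n - m t) * (INR n - m t) ^ k). ring.
Qed.

Definition mf (b : nat -> R) := Sj b 1.
Definition mf' (b : nat -> R) t := Sj b 2 t / t.
Definition mu (a b : nat -> R) k t := SH a (Hk (mf b) k) t / Sj a 0 t.

Lemma A0_pos a b t : (forall t, Sj a 0 t = exp (Sj b 0 t)) -> 0 < Sj a 0 t.
Proof. intro H; rewrite H; apply exp_pos. Qed.

Lemma A1_eq a b t : CV_radius a = p_infty -> CV_radius b = p_infty ->
  (forall t, Sj a 0 t = exp (Sj b 0 t)) -> 0 < t ->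
  Sj a 1 t = Sj b 1 t * Sj a 0 t.
Proof.
  intros Ra Rb Hab Ht.
  pose proof (derive_Sj a 0 t Ra ltac:(lra)) as D1.
  assert (D2 : is_derive (Sj a 0) t (Sj b 1 t / t * exp (Sj b 0 t))).
  { apply is_derive_ext with (f := fun s => exp (Sj b 0 s)).
    { intro s; rewrite Hab; auto. }
    apply (is_derive_comp exp (Sj b 0) t (exp (Sj b 0 t)) (Sj b 1 t / t)).
    apply is_derive_exp. apply derive_Sj; auto; lra. }
  apply is_derive_unique in D1. apply is_derive_unique in D2.
  rewrite D1 in D2. rewrite Hab.
  replace (Sj a 1 t) with (t * (Sj a 1 t / t)) by (field; lra). rewrite D2. field. lra.
Qed.

Lemma deriv_mf b t : CV_radius b = p_infty -> 0 < t -> is_derive (mf b) t (mf' b t).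
Proof. intros Rb Ht. apply derive_Sj; auto; lra. Qed.

Lemma SH_Hk0 a m t : CV_radius a = p_infty -> SH a (Hk m 0) t = Sj a 0 t.
Proof.
  intro Ra. unfold SH. apply is_series_unique.
  eapply is_series_ext; [|apply (is_series_Sj a 0 t Ra)]. intro n. unfold Hk, wt. simpl. ring.
Qed.

Lemma mu0 a b t : CV_radius a = p_infty -> (forall t, Sj a 0 t = exp (Sj b 0 t)) -> mu a b 0 t = 1.
Proof.
  intros Ra Hab. unfold mu. rewrite SH_Hk0; auto. field. apply Rgt_not_eq, (A0_pos a b t Hab).
Qed.

Lemma mu1 a b t : CV_radius a = p_infty -> CV_radius b = p_infty ->
  (forall t, Sj a 0 t = exp (Sj b 0 t)) -> 0 < t -> mu a b 1 t = 0.
Proof.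
  intros Ra Rb Hab Ht. unfold mu.
  assert (SH a (Hk (mf b) 1) t = Sj a 1 t - mf b t * Sj a 0 t) as E.
  { unfold SH. apply is_series_unique.
    eapply is_series_ext; [|apply (is_series_minus _ _ _ _ (is_series_Sj a 1 t Ra) (is_series_scal_l (mf b t) _ _ (is_series_Sj a 0 t Ra)))].
    intro n. unfold Hk, wt. change (INR n ^ 1 * a n * t ^ n - mf b t * (INR n ^ 0 * a n * t ^ n) = (INR n - mf b t) ^ 1 * (a n * t ^ n)). simpl. ring. }
  rewrite E, A1_eq with (b := b); auto. unfold mf. field. apply Rgt_not_eq, (A0_pos a b t Hab).
Qed.

Lemma mu_rec a b k t : CV_radius a = p_infty -> CV_radius b = p_infty ->
  (forall t, Sj a 0 t = exp (Sj b 0 t)) -> 0 < t ->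
  exists d, is_derive (mu a b k) t d /\
     mu a b (S k) t = t * d + INR k * Sj b 2 t * mu a b (pred k) t.
Proof.
  intros Ra Rb Hab Ht.
  assert (Hm : forall t, 0 < t -> is_derive (mf b) t (mf' b t)) by (intros; apply deriv_mf; auto).
  destruct (PN_series a _ _ Ra (PN_Hk (mf b) (mf' b) k Hm) t Ht) as (E1 & E2 & E3 & D).
  destruct (PN_series a _ _ Ra (PN_Hk (mf b) (mf' b) (S k) Hm) t Ht) as (F1 & _).
  destruct (PN_series a _ _ Ra (PN_Hk (mf b) (mf' b) (pred k) Hm) t Ht) as (G1 & _).
  set (S0 := SH a (Hk (mf b) k) t).
  assert (A0p := A0_pos a b t Hab).
  assert (DA : is_derive (Sj a 0) t (mf b t * Sj a 0 t / t)).
  { unfold mf. rewrite <- A1_eq; auto. apply derive_Sj; auto; lra. }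
  pose proof (is_derive_div _ _ t _ _ D DA ltac:(lra)) as DD.
  eexists; split; [exact DD|].
  assert (EH' : SH a (H'k (mf b) (mf' b) k) t = - INR k * mf' b t * SH a (Hk (mf b) (pred k)) t).
  { unfold SH. rewrite <- Series_scal_l. apply Series_ext. intro n. unfold H'k, Hk. ring. }
  assert (EnH : SH a (fun n t => INR n * Hk (mf b) k n t) t = SH a (Hk (mf b) (S k)) t + mf b t * S0).
  { unfold S0, SH. rewrite <- Series_scal_l. rewrite <- Series_plus; auto.
    apply Series_ext. intro n. unfold Hk. simpl. ring.
    apply (ex_series_scal_l (mf b t)) in E1. exact E1. }
  rewrite EH', EnH. unfold mu. fold S0. unfold mf'.
  field. split; lra.
Qed.

Inductive Iso (b : nat -> R) : nat -> R -> (R -> R) -> Prop :=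
| I_const c : Iso b 0 c (fun _ => c)
| I_zero w : Iso b w 0 (fun _ => 0)
| I_k2 w c f : Iso b w c f -> Iso b (S (S w)) c (fun t => Sj b 2 t * f t)
| I_kj w c f j : (3 <= j)%nat -> Iso b w c f -> Iso b (j + w) 0 (fun t => Sj b j t * f t)
| I_plus w c d f g : Iso b w c f -> Iso b w d g -> Iso b w (c + d) (fun t => f t + g t)
| I_scal w c r f : Iso b w c f -> Iso b w (r * c) (fun t => r * f t)
| I_ext w c f g : Iso b w c f -> (forall t, 0 < t -> f t = g t) -> Iso b w c g.

Lemma Iso_c b w c c' f : Iso b w c f -> c = c' -> Iso b w c' f.
Proof. intros H E; subst; auto. Qed.

Lemma Iso_w b w w' c f : Iso b w c f -> w = w' -> Iso b w' c f.
Proof. intros H E; subst; auto. Qed.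

Lemma Iso_deriv b w c f : CV_radius b = p_infty -> Iso b w c f ->
  exists f', (forall t, 0 < t -> is_derive f t (f' t)) /\ Iso b (S w) 0 (fun t => t * f' t).
Proof.
  intros Rb I. induction I as [c|w|w c f I IH|w c f j Hj I IH|w c d f g I1 IH1 I2 IH2|w c r f I IH|w c f g I IH Hfg].
  - exists (fun _ => 0). split.
    + intros; apply (is_derive_const (K:=R_AbsRing) (V:=R_NormedModule) c).
    + eapply I_ext. apply (I_zero b 1). intros; simpl; ring.
  - exists (fun _ => 0). split.
    + intros; apply (is_derive_const (K:=R_AbsRing) (V:=R_NormedModule) 0).
    + eapply I_ext. apply (I_zero b (S w)). intros; simpl; ring.
  - destruct IH as (f' & Df & If').
    exists (fun t => Sj b 3 t / t * f t + Sj b 2 t * f' t). split.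
    + intros t Ht. apply is_derive_mult_R; auto. apply derive_Sj; auto; lra.
    + eapply I_ext. eapply Iso_c. apply I_plus.
      apply (I_kj b w c f 3); auto.
      apply (I_k2 b (S w) 0 _ If').
      ring. intros t Ht. simpl. field. lra.
  - destruct IH as (f' & Df & If').
    exists (fun t => Sj b (S j) t / t * f t + Sj b j t * f' t). split.
    + intros t Ht. apply is_derive_mult_R; auto. apply derive_Sj; auto; lra.
    + eapply I_ext. eapply Iso_c. apply I_plus.
      apply (I_kj b w c f (S j)); auto.
      eapply Iso_w. apply (I_kj b (S w) 0 _ j Hj If'). lia.
      ring. intros t Ht. simpl. field. lra.
  - destruct IH1 as (f1 & D1 & J1). destruct IH2 as (g1 & D2 & J2).
    exists (fun t => f1 t + g1 t). split.
    + intros t Ht. apply (is_derive_plus f g); auto.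
    + eapply I_ext. eapply Iso_c. apply (I_plus b _ _ _ _ _ J1 J2). ring.
      intros t Ht. simpl. ring.
  - destruct IH as (f1 & D1 & J1). exists (fun t => r * f1 t). split.
    + intros t Ht. apply is_derive_scal; auto.
    + eapply I_ext. eapply Iso_c. apply (I_scal b _ _ r _ J1). ring.
      intros t Ht; simpl; ring.
  - destruct IH as (f1 & D1 & J1). exists f1. split; auto.
    intros t Ht. apply is_derive_ext_loc with (f := f); auto.
    apply filter_imp with (2 := locally_pos t Ht). intros; auto.
Qed.

Fixpoint gm (k : nat) : R :=
  match k with
  | O => 1
  | S O => 0
  | S ((S k') as k1) => INR k1 * gm k'
  end.

Lemma mu_Iso a b : CV_radius a = p_infty -> CV_radius b = p_infty ->
  (forall t, Sj a 0 t = exp (Sj b 0 t)) ->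
  forall k, Iso b k (gm k) (mu a b k) /\ Iso b (S k) (gm (S k)) (mu a b (S k)).
Proof.
  intros Ra Rb Hab k. induction k.
  - split.
    + eapply I_ext. apply (I_const b 1). intros; rewrite mu0; auto.
    + eapply I_ext. apply (I_zero b 1). intros; rewrite mu1; auto.
  - destruct IHk as [I0 I1]. split; auto.
    destruct (Iso_deriv b _ _ _ Rb I1) as (f' & Df & If').
    eapply I_ext. eapply Iso_c. apply (I_plus b _ _ _ _ _ If' (I_scal b _ _ (INR (S k)) _ (I_k2 b _ _ _ I0))).
    change (gm (S (S k))) with (INR (S k) * gm k); ring.
    intros t Ht. destruct (mu_rec a b (S k) t Ra Rb Hab Ht) as (d & Dd & E).
    rewrite E. simpl pred. 
    apply is_derive_unique in Dd. rewrite (is_derive_unique _ _ _ (Df t Ht)) in Dd. subst d.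
    ring.
Qed.

Lemma is_lim_ext_pos (f g : R -> R) (l : Rbar) :
  (forall t, 0 < t -> f t = g t) -> is_lim f p_infty l -> is_lim g p_infty l.
Proof.
  intros H L. apply is_lim_ext_loc with (f := f); auto.
  exists 0. intros; apply H; auto.
Qed.

Lemma Iso_lim b w c f :
  (forall t, 0 < t -> 0 < Sj b 2 t) ->
  (forall j, (3 <= j)%nat -> is_lim (fun t => Sj b j t / sqrt (Sj b 2 t) ^ j) p_infty 0) ->
  Iso b w c f -> is_lim (fun t => f t / sqrt (Sj b 2 t) ^ w) p_infty c.
Proof.
  intros Hp KL I.
  assert (sq : forall t, 0 < t -> sqrt (Sj b 2 t) * sqrt (Sj b 2 t) = Sj b 2 t).
  { intros t Ht. apply sqrt_sqrt. apply Rlt_le, Hp; auto. }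
  assert (sp : forall t, 0 < t -> 0 < sqrt (Sj b 2 t)).
  { intros t Ht. apply sqrt_lt_R0. apply Hp; auto. }
  induction I as [c|w|w c f I IH|w c f j Hj I IH|w c d f g I1 IH1 I2 IH2|w c r f I IH|w c f g I IH Hfg].
  - eapply is_lim_ext_pos; [|apply (is_lim_const c)]. intros; simpl; field.
  - eapply is_lim_ext_pos; [|apply (is_lim_const 0)]. intros; simpl. unfold Rdiv; ring.
  - eapply is_lim_ext_pos; [|exact IH]. intros t Ht. 
    pose proof (sq t Ht) as E.
    replace (Sj b 2 t * f t) with (sqrt (Sj b 2 t) * sqrt (Sj b 2 t) * f t) by (rewrite E; ring).
    change (sqrt (Sj b 2 t) ^ S (S w)) with (sqrt (Sj b 2 t) * (sqrt (Sj b 2 t) * sqrt (Sj b 2 t) ^ w)). field. split. apply pow_nonzero. apply Rgt_not_eq, sp; auto.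
    apply Rgt_not_eq, sp; auto.
  - pose proof (is_lim_mult _ _ _ _ _ (KL j Hj) IH ltac:(simpl; auto)) as L. simpl in L.
    replace (Finite (0 * c)) with (Finite 0) in L by (f_equal; ring).
    eapply is_lim_ext_pos; [|exact L]. intros t Ht. rewrite pow_add. field.
    split; apply pow_nonzero; apply Rgt_not_eq, sp; auto.
  - pose proof (is_lim_plus _ _ _ _ _ (Finite (c + d)) IH1 IH2) as L.
    eapply is_lim_ext_pos; [|apply L]. intros t Ht. cbv beta. field. apply pow_nonzero; apply Rgt_not_eq, sp; auto.
    reflexivity.
  - pose proof (is_lim_scal_l _ r _ _ IH) as L. simpl in L.
    eapply is_lim_ext_pos; [|apply L]. intros t Ht. cbv beta. field. apply pow_nonzero; apply Rgt_not_eq, sp; auto.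
  - eapply is_lim_ext_pos; [|apply IH]. intros t Ht. rewrite <- Hfg; auto.
Qed.

Lemma radius_inf_of_ex (a : nat -> R) : (forall x, ex_pseries a x) -> CV_radius a = p_infty.
Proof.
  intro H.
  assert (Hin : forall r, exists M, forall n, Rabs (a n * r ^ n) <= M).
  { intro r. destruct (H r) as [l Hl].
    assert (L : is_lim_seq (fun n => a n * r ^ n) 0).
    { apply ex_series_lim_0. exists l. eapply is_series_ext; [|exact Hl].
      intro n. rewrite pow_n_pow. change (r ^ n * a n = a n * r ^ n). ring. }
    destruct (filterlim_bounded (fun n => a n * r ^ n)) as [M HM].
    { exists 0. exact L. }
    exists M. intro n. exact (HM n). }
  destruct (CV_radius_bounded a) as [Hub Hlub].
  destruct (CV_radius a) as [y| |] eqn:E; auto.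
  - exfalso. assert (Rbar_le (y + 1) y) by (apply Hub; apply Hin). simpl in H0. lra.
  - exfalso. assert (Rbar_le 0 m_infty) by (apply Hub; apply Hin). simpl in H0. auto.
Qed.

Lemma PSeries_Sj0 a t : PSeries a t = Sj a 0 t.
Proof. unfold Sj, cj. apply PSeries_ext. intro n; simpl; ring. Qed.

Lemma mu2 a b t : CV_radius a = p_infty -> CV_radius b = p_infty ->
  (forall t, Sj a 0 t = exp (Sj b 0 t)) -> 0 < t -> mu a b 2 t = Sj b 2 t.
Proof.
  intros Ra Rb Hab Ht. destruct (mu_rec a b 1 t Ra Rb Hab Ht) as (d & Dd & E).
  assert (D0 : is_derive (mu a b 1) t 0).
  { apply is_derive_ext_loc with (f := fun _ => 0).
    apply filter_imp with (2 := locally_pos t Ht). intros s Hs. rewrite mu1; auto.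
    apply (is_derive_const (K:=R_AbsRing) (V:=R_NormedModule) 0). }
  apply is_derive_unique in Dd. apply is_derive_unique in D0. rewrite <- Dd, D0 in E.
  rewrite E. simpl pred. rewrite mu0; auto. change (INR 1) with 1. ring.
Qed.

Lemma kmean_eq a b t : CV_radius a = p_infty -> CV_radius b = p_infty ->
  (forall t, Sj a 0 t = exp (Sj b 0 t)) -> 0 < t -> kmean a t = mf b t.
Proof.
  intros Ra Rb Hab Ht. unfold kmean, khinchin_pmf. rewrite PSeries_Sj0.
  assert (A0p := A0_pos a b t Hab).
  apply is_series_unique.
  replace (mf b t) with (/ Sj a 0 t * Sj a 1 t).
  2: { rewrite A1_eq with (b := b); auto. unfold mf. field. lra. }
  eapply is_series_ext; [|apply (is_series_scal_l (/ Sj a 0 t) _ _ (is_series_Sj a 1 t Ra))].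
  intro n. change (/ Sj a 0 t * (INR n ^ 1 * a n * t ^ n) = INR n * (a n * t ^ n / Sj a 0 t)).
  field. lra.
Qed.



Lemma knorm_eq a b k t : CV_radius a = p_infty -> CV_radius b = p_infty ->
  (forall t, Sj a 0 t = exp (Sj b 0 t)) -> 0 < t -> 0 < Sj b 2 t ->
  knorm_moment a t k = mu a b k t / sqrt (Sj b 2 t) ^ k.
Proof.
  intros Ra Rb Hab Ht Hp.
  assert (A0p := A0_pos a b t Hab).
  assert (sp : 0 < sqrt (Sj b 2 t)) by (apply sqrt_lt_R0; auto).
  assert (kv : kvar a t = Sj b 2 t).
  { unfold kvar. rewrite kmean_eq with (b := b); auto. rewrite <- mu2 with (a := a); auto.
    unfold mu, SH, khinchin_pmf. rewrite PSeries_Sj0. unfold Rdiv at 2. rewrite Rmult_comm.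
    rewrite <- Series_scal_l. apply Series_ext. intro n. unfold Hk, wt. field. lra. }
  unfold knorm_moment. rewrite kv, kmean_eq with (b := b); auto.
  unfold mu, SH, khinchin_pmf. rewrite PSeries_Sj0.
  replace (Series (fun n => Hk (mf b) k n t * wt a n t) / Sj a 0 t / sqrt (Sj b 2 t) ^ k) with
    (/ (Sj a 0 t * sqrt (Sj b 2 t) ^ k) * Series (fun n => Hk (mf b) k n t * wt a n t)).
  2: { field. repeat split; try apply pow_nonzero; lra. }
  rewrite <- Series_scal_l. apply Series_ext. intro n. unfold Hk, wt.
  unfold Rdiv. rewrite Rpow_mult_distr, pow_inv. field. repeat split; try apply pow_nonzero; lra.
Qed.

Lemma radius_cj_eq c j : CV_radius (cj c j) = CV_radius c.
Proof.
  induction j.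
  - apply CV_radius_ext. intro n; unfold cj; simpl; ring.
  - rewrite (CV_radius_ext _ _ (cj_S c j)), CV_radius_incr_1, CV_radius_derive; auto.
Qed.

Lemma term_le_series (u : nat -> R) l n0 : (forall n, 0 <= u n) -> is_series u l -> u n0 <= l.
Proof.
  intros Hu Hs.
  assert (Hp : forall n, 0 <= sum_n u n /\ u n <= sum_n u n).
  { induction n. rewrite sum_O. split; [apply Hu|lra].
    rewrite sum_Sn. change (plus (sum_n u n) (u (S n))) with (sum_n u n + u (S n)).
    pose proof (Hu (S n)). lra. }
  apply Rle_trans with (sum_n u n0). apply Hp.
  apply (is_lim_seq_incr_compare (sum_n u) l Hs).
  intro n. rewrite sum_Sn. change (plus (sum_n u n) (u (S n))) with (sum_n u n + u (S n)).
  pose proof (Hu (S n)). lra.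
Qed.

Lemma pow2_bound j : exists C, forall n, INR n ^ j <= C * 2 ^ n.
Proof.
  assert (R1 : CV_radius (fun _ : nat => 1) = 1).
  { rewrite (CV_radius_finite_DAlembert _ 1). rewrite Rinv_1; reflexivity.
    intros; lra. lra. eapply is_lim_seq_ext; [|apply is_lim_seq_const].
    intro n. simpl. rewrite Rdiv_1_r, Rabs_R1. reflexivity. }
  assert (E : ex_series (fun n => Rabs (cj (fun _ => 1) j n * (/2) ^ n))).
  { apply CV_disk_inside. rewrite radius_cj_eq, R1. simpl.
    rewrite Rabs_pos_eq; lra. }
  apply ex_series_lim_0 in E.
  destruct (filterlim_bounded _ (ex_intro _ 0 E)) as [M HM].
  exists M. intro n. specialize (HM n).
  change (norm (Rabs (cj (fun _ => 1) j n * (/ 2) ^ n))) with (Rabs (Rabs (cj (fun _ => 1) j n * (/ 2) ^ n))) in HM.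
  rewrite Rabs_Rabsolu in HM. unfold cj in HM. rewrite Rmult_1_r in HM.
  rewrite pow_inv in HM. rewrite Rabs_pos_eq in HM.
  2: { apply Rmult_le_pos. apply pow_le, pos_INR. apply Rlt_le, Rinv_0_lt_compat, pow_lt; lra. }
  assert (P : 0 < 2 ^ n) by (apply pow_lt; lra).
  apply (Rmult_le_compat_r (2 ^ n)) in HM; [|lra].
  rewrite Rmult_assoc, Rinv_l in HM; lra.
Qed.

Lemma Sj_series_eq c j t : CV_radius c = p_infty ->
  Sj c j t = Series (fun n => INR n ^ j * c n * t ^ n).
Proof. intro R. symmetry. apply is_series_unique, is_series_Sj; auto. Qed.

Lemma ex_Sj c j t : CV_radius c = p_infty -> ex_series (fun n => INR n ^ j * c n * t ^ n).
Proof. intro R. eexists. apply is_series_Sj; auto. Qed.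

Lemma Gj_bound_N b j C N t : CV_radius b = p_infty -> (forall n, 0 <= b n) ->
  (forall n, INR n ^ j <= C * 2 ^ n) -> (2 <= j)%nat -> 0 < t ->
  Sj b j t <= INR N ^ (j - 2) * Sj b 2 t + C / 2 ^ N * Sj b 0 (4 * t).
Proof.
  intros Rb bnn HC Hj Ht.
  rewrite !Sj_series_eq with (c := b); auto.
  rewrite <- !Series_scal_l. rewrite <- Series_plus.
  2: { apply (ex_series_scal_l (V := R_NormedModule)). apply ex_Sj; auto. }
  2: { apply (ex_series_scal_l (V := R_NormedModule)). apply ex_Sj; auto. }
  apply Series_le.
  2: { apply (ex_series_plus (V := R_NormedModule)); apply (ex_series_scal_l (V := R_NormedModule)); apply ex_Sj; auto. }
  intro n. 
  assert (P2 : 0 < 2 ^ n) by (apply pow_lt; lra).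
  assert (P2N : 0 < 2 ^ N) by (apply pow_lt; lra).
  assert (Pt : 0 < t ^ n) by (apply pow_lt; lra).
  assert (Hb := bnn n).
  assert (C0 : 0 <= C). { specialize (HC 0%nat). simpl in HC. destruct j; [lia|]. simpl in HC. nra. }
  split. { apply Rmult_le_pos. apply Rmult_le_pos; auto. apply pow_le, pos_INR. lra. }
  assert (T2 : 0 <= C / 2 ^ N * (INR n ^ 0 * b n * (4 * t) ^ n)).
  { apply Rmult_le_pos. apply Rdiv_le_0_compat; lra. apply Rmult_le_pos. simpl; lra. apply pow_le; lra. }
  assert (T1 : 0 <= INR N ^ (j - 2) * (INR n ^ 2 * b n * t ^ n)).
  { apply Rmult_le_pos. apply pow_le, pos_INR. apply Rmult_le_pos. apply Rmult_le_pos; auto. apply pow_le, pos_INR. lra. }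
  destruct (Compare_dec.le_lt_dec n N) as [HnN|HnN].
  - replace (INR n ^ j) with (INR n ^ (j - 2) * INR n ^ 2) by (rewrite <- pow_add; f_equal; lia).
    assert (INR n ^ (j - 2) <= INR N ^ (j - 2)). { apply pow_incr. split. apply pos_INR. apply le_INR; auto. }
    assert (0 <= INR n ^ 2 * b n * t ^ n). { apply Rmult_le_pos. apply Rmult_le_pos; auto. apply pow_le, pos_INR. lra. }
    assert (INR n ^ (j - 2) * INR n ^ 2 * b n * t ^ n = INR n ^ (j - 2) * (INR n ^ 2 * b n * t ^ n)) by ring.
    nra.
  - assert (H4 : (4 * t) ^ n = 2 ^ n * 2 ^ n * t ^ n).
    { replace (4 * t) with (2 * 2 * t) by ring. rewrite !Rpow_mult_distr. ring. }
    assert (HN : 2 ^ N <= 2 ^ n). { apply Rle_pow. lra. lia. }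
    assert (INR n ^ j * b n * t ^ n <= C * 2 ^ n * b n * t ^ n).
    { apply Rmult_le_compat_r. lra. apply Rmult_le_compat_r; auto. }
    assert (C * 2 ^ n * b n * t ^ n <= C / 2 ^ N * (INR n ^ 0 * b n * (4 * t) ^ n)).
    { assert (E : C / 2 ^ N * (INR n ^ 0 * b n * (4 * t) ^ n) = (C * 2 ^ n * b n * t ^ n) * (2 ^ n / 2 ^ N)).
      { rewrite H4. simpl pow. field. lra. }
      assert (Q : 1 <= 2 ^ n / 2 ^ N).
      { unfold Rdiv. apply (Rmult_le_reg_r (2 ^ N)); [lra|]. rewrite Rmult_assoc, Rinv_l; lra. }
      assert (X : 0 <= C * 2 ^ n * b n * t ^ n).
      { apply Rmult_le_pos; [|lra]. apply Rmult_le_pos; [|lra]. nra. }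
      rewrite E. nra. }
    lra.
Qed.

Lemma Gj_bound_poly b j D t : CV_radius b = p_infty -> (forall n, 0 <= b n) ->
  (forall n, (D < n)%nat -> b n = 0) -> (2 <= j)%nat -> 0 < t ->
  Sj b j t <= INR D ^ (j - 2) * Sj b 2 t.
Proof.
  intros Rb bnn HD Hj Ht.
  rewrite !Sj_series_eq with (c := b); auto.
  rewrite <- !Series_scal_l.
  apply Series_le.
  2: { apply (ex_series_scal_l (V := R_NormedModule)). apply ex_Sj; auto. }
  intro n. assert (Pt : 0 < t ^ n) by (apply pow_lt; lra). assert (Hb := bnn n).
  split. { apply Rmult_le_pos. apply Rmult_le_pos; auto. apply pow_le, pos_INR. lra. }
  destruct (Compare_dec.le_lt_dec n D) as [HnN|HnN].
  - replace (INR n ^ j) with (INR n ^ (j - 2) * INR n ^ 2) by (rewrite <- pow_add; f_equal; lia).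
    assert (INR n ^ (j - 2) <= INR D ^ (j - 2)). { apply pow_incr. split. apply pos_INR. apply le_INR; auto. }
    assert (0 <= INR n ^ 2 * b n * t ^ n). { apply Rmult_le_pos. apply Rmult_le_pos; auto. apply pow_le, pos_INR. lra. }
    assert (INR n ^ (j - 2) * INR n ^ 2 * b n * t ^ n = INR n ^ (j - 2) * (INR n ^ 2 * b n * t ^ n)) by ring.
    nra.
  - rewrite HD; auto. rewrite !Rmult_0_r, !Rmult_0_l, Rmult_0_r. lra.
Qed.

Lemma G_term_le b j n t : CV_radius b = p_infty -> (forall n, 0 <= b n) -> 0 < t ->
  INR n ^ j * b n * t ^ n <= Sj b j t.
Proof.
  intros Rb bnn Ht. apply (term_le_series (fun n => INR n ^ j * b n * t ^ n)).
  intro m. apply Rmult_le_pos. apply Rmult_le_pos; auto. apply pow_le, pos_INR. apply pow_le; lra.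
  apply is_series_Sj; auto.
Qed.

Lemma nat_up x : 0 <= x -> x <= INR (Z.to_nat (up x)) <= x + 1.
Proof.
  intro Hx. destruct (archimed x) as [A1 A2].
  assert (P : (0 <= up x)%Z). { apply le_IZR. lra. }
  rewrite INR_IZR_INZ, Z2Nat.id; auto. lra.
Qed.

Lemma exp_le_mono x y : x <= y -> exp x <= exp y.
Proof. intro H. destruct (Rle_lt_or_eq_dec _ _ H) as [H1|H1]. apply Rlt_le, exp_increasing; auto. subst; lra. Qed.

Lemma pow_le_self x m : 0 <= x <= 1 -> (1 <= m)%nat -> x ^ m <= x.
Proof.
  intros Hx Hm. destruct m; [lia|]. simpl. 
  assert (x ^ m <= 1). { replace 1 with (1 ^ m) by apply pow1. apply pow_incr. lra. } assert (0 <= x ^ m) by (apply pow_le; lra). nra.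
Qed.

Lemma pow_ge_self x m : 1 <= x -> (1 <= m)%nat -> x <= x ^ m.
Proof.
  intros Hx Hm. replace x with (x ^ 1) at 1 by ring. apply Rle_pow; auto.
Qed.

Lemma lim_inv_sqrt c : is_lim (fun t => c / sqrt t) p_infty 0.
Proof.
  pose proof (is_lim_inv _ _ _ (is_lim_sqrt_p _ _ (is_lim_id p_infty)) ltac:(discriminate)) as L.
  simpl in L. pose proof (is_lim_scal_l _ c _ _ L) as L2. simpl in L2.
  rewrite Rmult_0_r in L2. eapply is_lim_ext; [|exact L2]. intro; simpl. unfold Rdiv; auto.
Qed.

Lemma lim_inv c : is_lim (fun t => c / t) p_infty 0.
Proof.
  pose proof (is_lim_inv _ _ _ (is_lim_id p_infty) ltac:(discriminate)) as L.
  simpl in L. pose proof (is_lim_scal_l _ c _ _ L) as L2. simpl in L2.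
  rewrite Rmult_0_r in L2. eapply is_lim_ext; [|exact L2]. intro; simpl. unfold Rdiv; auto.
Qed.

Lemma Sj_nonneg b j t : CV_radius b = p_infty -> (forall n, 0 <= b n) -> 0 < t -> 0 <= Sj b j t.
Proof.
  intros Rb bnn Ht. apply Rle_trans with (INR 0 ^ j * b 0%nat * t ^ 0).
  pose proof (bnn 0%nat). destruct j; simpl; [nra|]. nra.
  apply G_term_le; auto.
Qed.

Lemma G2_lower b n0 t : CV_radius b = p_infty -> (forall n, 0 <= b n) -> (1 <= n0)%nat ->
  1 <= t -> b n0 * t <= Sj b 2 t.
Proof.
  intros Rb bnn Hn0 Ht. apply Rle_trans with (INR n0 ^ 2 * b n0 * t ^ n0); [|apply G_term_le; auto; lra].
  assert (1 <= INR n0) by (replace 1 with (INR 1) by reflexivity; apply le_INR; auto).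
  assert (1 <= INR n0 ^ 2) by (simpl; nra).
  assert (t <= t ^ n0) by (apply pow_ge_self; auto).
  pose proof (bnn n0).
  assert (b n0 * t <= b n0 * t ^ n0) by (apply Rmult_le_compat_l; auto).
  assert (0 <= b n0 * t ^ n0) by nra. nra.
Qed.

Lemma G2_lower_pow b n1 p t : CV_radius b = p_infty -> (forall n, 0 <= b n) -> (1 <= n1)%nat -> (p <= n1)%nat ->
  1 <= t -> b n1 * t ^ p <= Sj b 2 t.
Proof.
  intros Rb bnn Hn0 Hp Ht. apply Rle_trans with (INR n1 ^ 2 * b n1 * t ^ n1); [|apply G_term_le; auto; lra].
  assert (1 <= INR n1) by (replace 1 with (INR 1) by reflexivity; apply le_INR; auto).
  assert (1 <= INR n1 ^ 2) by (simpl; nra).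
  assert (t ^ p <= t ^ n1) by (apply Rle_pow; auto).
  assert (0 <= t ^ p) by (apply pow_le; lra).
  pose proof (bnn n1).
  assert (b n1 * t ^ p <= b n1 * t ^ n1) by (apply Rmult_le_compat_l; auto).
  assert (0 <= b n1 * t ^ n1) by nra. nra.
Qed.

Lemma KL_poly b j D n0 : CV_radius b = p_infty -> (forall n, 0 <= b n) -> (1 <= n0)%nat -> b n0 <> 0 ->
  (forall n, (D < n)%nat -> b n = 0) -> (3 <= j)%nat ->
  is_lim (fun t => Sj b j t / sqrt (Sj b 2 t) ^ j) p_infty 0.
Proof.
  intros Rb bnn Hn0 Hb0 HD Hj.
  assert (bp : 0 < b n0) by (pose proof (bnn n0); lra).
  apply is_lim_le_le_loc with (f := fun _ => 0) (g := fun t => (INR D ^ (j - 2) / sqrt (b n0)) / sqrt t).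
  2: apply is_lim_const.
  2: apply lim_inv_sqrt.
  exists (1 + / b n0). intros t Ht.
  assert (Hinv : 0 < / b n0) by (apply Rinv_0_lt_compat; auto).
  assert (t1 : 1 <= t) by lra.
  assert (LB := G2_lower b n0 t Rb bnn Hn0 t1).
  assert (G2p : 0 < Sj b 2 t) by nra.
  assert (bt1 : 1 <= b n0 * t).
  { apply Rle_trans with (b n0 * / b n0). rewrite Rinv_r; lra. apply Rmult_le_compat_l; lra. }
  set (s := sqrt (Sj b 2 t)).
  assert (sp : 0 < s) by (apply sqrt_lt_R0; auto).
  assert (ss : s * s = Sj b 2 t) by (apply sqrt_sqrt; lra).
  assert (s1 : 1 <= s). { unfold s. rewrite <- sqrt_1. apply sqrt_le_1_alt. lra. }
  assert (sl : sqrt (b n0) * sqrt t <= s). { unfold s. rewrite <- sqrt_mult by lra. apply sqrt_le_1_alt. lra. }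
  assert (sb : 0 < sqrt (b n0) * sqrt t) by (apply Rmult_lt_0_compat; apply sqrt_lt_R0; lra).
  assert (Gj0 := Sj_nonneg b j t Rb bnn ltac:(lra)).
  assert (GjB := Gj_bound_poly b j D t Rb bnn HD ltac:(lia) ltac:(lra)).
  assert (sjp : 0 < s ^ j) by (apply pow_lt; auto).
  assert (sj : s ^ j = s ^ (j - 2) * (s * s)) by (replace j with ((j - 2) + 2)%nat at 1 by lia; rewrite pow_add; simpl; ring).
  assert (sj2 : s <= s ^ (j - 2)) by (apply pow_ge_self; auto; lia).
  assert (Dp : 0 <= INR D ^ (j - 2)) by (apply pow_le, pos_INR).
  split. { apply Rdiv_le_0_compat; auto. }
  apply Rle_trans with (INR D ^ (j - 2) * Sj b 2 t / s ^ j).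
  { unfold Rdiv. apply Rmult_le_compat_r; auto. apply Rlt_le, Rinv_0_lt_compat; auto. }
  rewrite sj, <- ss.
  replace (INR D ^ (j - 2) * (s * s) / (s ^ (j - 2) * (s * s))) with (INR D ^ (j - 2) / s ^ (j - 2)).
  2: { field. split. lra. apply pow_nonzero. lra. }
  replace (INR D ^ (j - 2) / sqrt (b n0) / sqrt t) with (INR D ^ (j - 2) / (sqrt (b n0) * sqrt t)).
  2: { field. split; apply Rgt_not_eq, sqrt_lt_R0; lra. }
  apply Rle_trans with (INR D ^ (j - 2) / s).
  - unfold Rdiv. apply Rmult_le_compat_l; auto. apply Rinv_le_contravar; lra.
  - unfold Rdiv. apply Rmult_le_compat_l; auto. apply Rinv_le_contravar; lra.
Qed.

Lemma KL_trans b j k R1 n0 n1 : CV_radius b = p_infty -> (forall n, 0 <= b n) ->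
  (1 <= n0)%nat -> b n0 <> 0 -> (2 * k + 2 <= n1)%nat -> b n1 <> 0 ->
  (forall r, R1 <= r -> Sj b 0 r <= exp (r ^ k)) -> (3 <= j)%nat ->
  is_lim (fun t => Sj b j t / sqrt (Sj b 2 t) ^ j) p_infty 0.
Proof.
  intros Rb bnn Hn0 Hb0 Hn1 Hb1 HG Hj.
  assert (bp : 0 < b n0) by (pose proof (bnn n0); lra).
  assert (bp1 : 0 < b n1) by (pose proof (bnn n1); lra).
  destruct (pow2_bound j) as [C HC].
  assert (C0 : 0 <= C). { specialize (HC 0%nat). simpl in HC. destruct j; [lia|]. simpl in HC. nra. }
  assert (sb1 : 0 < sqrt (b n1)) by (apply sqrt_lt_R0; auto).
  set (D1 := 3 * 4 ^ k / sqrt (b n1)).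
  assert (D1p : 0 <= D1). { unfold D1. apply Rdiv_le_0_compat; auto. assert (0 < 4 ^ k) by (apply pow_lt; lra). lra. }
  pose proof (is_lim_plus _ _ p_infty 0 0 0 (lim_inv D1) (lim_inv_sqrt (C / sqrt (b n0))) ltac:(unfold is_Rbar_plus; simpl; rewrite Rplus_0_r; reflexivity)) as Lg.
  apply is_lim_le_le_loc with (f := fun _ => 0) (2 := is_lim_const 0 p_infty) (3 := Lg).
  exists (1 + / b n0 + Rabs R1 + D1). intros t Ht.
  assert (Hinv : 0 < / b n0) by (apply Rinv_0_lt_compat; auto).
  assert (t1 : 1 <= t) by (pose proof (Rabs_pos R1); lra).
  assert (LB := G2_lower b n0 t Rb bnn Hn0 t1).
  assert (G2p : 0 < Sj b 2 t) by nra.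
  assert (bt1 : 1 <= b n0 * t).
  { apply Rle_trans with (b n0 * / b n0). rewrite Rinv_r; lra. apply Rmult_le_compat_l; pose proof (Rabs_pos R1); lra. }
  set (s := sqrt (Sj b 2 t)).
  assert (sp : 0 < s) by (apply sqrt_lt_R0; auto).
  assert (ss : s * s = Sj b 2 t) by (apply sqrt_sqrt; lra).
  assert (s1 : 1 <= s). { unfold s. rewrite <- sqrt_1. apply sqrt_le_1_alt. lra. }
  assert (sl : sqrt (b n0) * sqrt t <= s). { unfold s. rewrite <- sqrt_mult by lra. apply sqrt_le_1_alt. lra. }
  assert (sb : 0 < sqrt (b n0) * sqrt t) by (apply Rmult_lt_0_compat; apply sqrt_lt_R0; lra).
  assert (Gj0 := Sj_nonneg b j t Rb bnn ltac:(lra)).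
  assert (sjp : 0 < s ^ j) by (apply pow_lt; auto).
  assert (sj : s ^ j = s ^ (j - 2) * (s * s)) by (replace j with ((j - 2) + 2)%nat at 1 by lia; rewrite pow_add; simpl; ring).
  assert (sj2 : s <= s ^ (j - 2)) by (apply pow_ge_self; auto; lia).
  assert (sj3 : s <= s ^ j) by (apply pow_ge_self; auto; lia).
  assert (P4k : 1 <= (4 * t) ^ k). { replace 1 with (1 ^ k) by apply pow1. apply pow_incr. lra. }
  set (N := Z.to_nat (up (2 * (4 * t) ^ k))).
  assert (HN := nat_up (2 * (4 * t) ^ k) ltac:(lra)). fold N in HN.
  assert (GN : Sj b 0 (4 * t) <= 2 ^ N).
  { apply Rle_trans with (exp ((4 * t) ^ k)). apply HG. pose proof (Rle_abs R1). lra.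
    replace (2 ^ N) with (exp (INR N * ln 2)).
    2: { rewrite <- ln_pow by lra. apply exp_ln. apply pow_lt; lra. }
    apply exp_le_mono. pose proof ln_lt_2. nra. }
  assert (P2N : 0 < 2 ^ N) by (apply pow_lt; lra).
  assert (G0p := Sj_nonneg b 0 (4 * t) Rb bnn ltac:(lra)).
  assert (GjB := Gj_bound_N b j C N t Rb bnn HC ltac:(lia) ltac:(lra)).
  assert (GjB2 : Sj b j t <= INR N ^ (j - 2) * Sj b 2 t + C).
  { assert (C / 2 ^ N * Sj b 0 (4 * t) <= C).
    { unfold Rdiv. replace C with (C * / 2 ^ N * 2 ^ N) at 2 by (field; lra).
      apply Rmult_le_compat_l; auto. apply Rmult_le_pos; auto. apply Rlt_le, Rinv_0_lt_compat; auto. }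
    lra. }
  assert (sl2 : sqrt (b n1) * t ^ (k + 1) <= s).
  { unfold s. replace (sqrt (b n1) * t ^ (k + 1)) with (sqrt (b n1 * t ^ (2 * k + 2))).
    apply sqrt_le_1_alt. apply G2_lower_pow; auto; lia.
    rewrite sqrt_mult by (try lra; apply pow_le; lra). f_equal.
    replace (2 * k + 2)%nat with ((k + 1) * 2)%nat by lia. rewrite pow_mult. apply sqrt_pow2. apply pow_le; lra. }
  assert (Ns : INR N / s <= D1 / t).
  { assert (INR N <= 3 * 4 ^ k * t ^ k). { replace (3 * 4 ^ k * t ^ k) with (3 * (4 * t) ^ k) by (rewrite Rpow_mult_distr; ring). lra. }
    assert (0 < t ^ k) by (apply pow_lt; lra).
    assert (0 < sqrt (b n1) * t ^ (k + 1)) by (apply Rmult_lt_0_compat; auto; apply pow_lt; lra).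
    apply Rle_trans with (3 * 4 ^ k * t ^ k / (sqrt (b n1) * t ^ (k + 1))).
    - unfold Rdiv. apply Rmult_le_compat; [apply pos_INR | apply Rlt_le, Rinv_0_lt_compat; lra | lra | apply Rinv_le_contravar; lra].
    - right. unfold D1. rewrite pow_add. field. repeat split; try apply pow_nonzero; lra. }
  assert (D1t : D1 / t <= 1). { apply (Rmult_le_reg_r t); [lra|]. unfold Rdiv. rewrite Rmult_assoc, Rinv_l; pose proof (Rabs_pos R1); lra. }
  assert (Nsp : 0 <= INR N / s) by (apply Rdiv_le_0_compat; auto; apply pos_INR).
  split. { apply Rdiv_le_0_compat; auto. }
  apply Rle_trans with ((INR N ^ (j - 2) * Sj b 2 t + C) / s ^ j).
  { unfold Rdiv. apply Rmult_le_compat_r; auto. apply Rlt_le, Rinv_0_lt_compat; auto. }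
  rewrite <- ss. 
  replace ((INR N ^ (j - 2) * (s * s) + C) / s ^ j) with ((INR N / s) ^ (j - 2) + C / s ^ j).
  2: { rewrite sj. unfold Rdiv. rewrite Rpow_mult_distr, pow_inv. field. split. lra. apply pow_nonzero; lra. }
  apply Rplus_le_compat.
  - apply Rle_trans with ((D1 / t) ^ (j - 2)). apply pow_incr; lra.
    apply pow_le_self. split; auto. apply Rdiv_le_0_compat; lra. lia.
  - replace (C / sqrt (b n0) / sqrt t) with (C / (sqrt (b n0) * sqrt t)) by (field; split; apply Rgt_not_eq, sqrt_lt_R0; lra).
    unfold Rdiv. apply Rmult_le_compat_l; auto. apply Rinv_le_contravar; lra.
Qed.

Lemma sum_n_RtoC (u : nat -> R) n : sum_n (fun k => RtoC (u k)) n = RtoC (sum_n u n).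
Proof.
  induction n. rewrite !sum_O. auto.
  rewrite !sum_Sn, IHn. change (plus (RtoC (sum_n u n)) (RtoC (u (S n))) = RtoC (plus (sum_n u n) (u (S n)))).
  unfold plus; simpl. rewrite RtoC_plus. reflexivity.
Qed.

Lemma RtoC_series (u : nat -> R) l : is_series u l ->
  @is_series C_AbsRing C_NormedModule (fun n => RtoC (u n)) (RtoC l).
Proof.
  intro H. unfold is_series in *.
  apply (filterlim_locally_ball_norm (K := C_AbsRing)). intro eps.
  apply (filterlim_locally_ball_norm (K := R_AbsRing)) with (eps := eps) in H.
  eapply filter_imp; [|exact H]. intros n Hn. simpl in *.
  unfold ball_norm in *. rewrite sum_n_RtoC.
  change (Cmod (RtoC (sum_n u n) - RtoC l)%C < eps). rewrite <- RtoC_minus, Cmod_R.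
  exact Hn.
Qed.

Lemma pow_n_RtoC r k : @pow_n C_Ring (RtoC r) k = RtoC (r ^ k).
Proof.
  induction k. reflexivity. simpl. rewrite IHk. change (RtoC r * RtoC (r ^ k))%C with (RtoC r * RtoC (r ^ k))%C.
  rewrite <- RtoC_mult. reflexivity.
Qed.

Lemma Cmod_pow_n z k : Cmod (@pow_n C_Ring z k) = Cmod z ^ k.
Proof.
  induction k. simpl. apply Cmod_1. simpl. change (Cmod (z * pow_n z k)%C = Cmod z * Cmod z ^ k).
  rewrite Cmod_mult, IHk. reflexivity.
Qed.

Lemma maxmod_eq b r : CV_radius b = p_infty -> (forall n, 0 <= b n) -> 0 <= r ->
  max_modulus b r = Sj b 0 r.
Proof.
  intros Rb bnn Hr.
  assert (Sr : is_series (fun k => b k * r ^ k) (Sj b 0 r)).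
  { eapply is_series_ext; [|apply (is_series_Sj b 0 r Rb)]. intro n; simpl; ring. }
  assert (G0 : 0 <= Sj b 0 r).
  { apply Rle_trans with (sum_n (fun k => b k * r ^ k) 0).
    rewrite sum_O. simpl. rewrite Rmult_1_r. auto.
    apply (is_lim_seq_incr_compare _ _ Sr). intro n. rewrite sum_Sn.
    change (sum_n (fun k => b k * r ^ k) n <= sum_n (fun k => b k * r ^ k) n + b (S n) * r ^ S n).
    assert (0 <= b (S n) * r ^ S n) by (apply Rmult_le_pos; auto; apply pow_le; auto). lra. }
  unfold max_modulus. rewrite (is_lub_Rbar_unique _ (Finite (Sj b 0 r))). reflexivity.
  split.
  - intros y (z & l & Hz & Hl & Hy). subst y. simpl.
    set (P := sum_n (fun k => scal (pow_n z k) (RtoC (b k)))).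
    assert (HP : forall n, Cmod (P n) <= sum_n (fun k => b k * r ^ k) n).
    { intro n. unfold P. induction n.
      - rewrite !sum_O. change (Cmod (pow_n z 0 * RtoC (b 0%nat))%C <= b 0%nat * r ^ 0).
        rewrite Cmod_mult, Cmod_pow_n, Cmod_R, Hz, Rabs_pos_eq; auto. lra.
      - rewrite !sum_Sn. change (Cmod (sum_n (fun k => scal (pow_n z k) (RtoC (b k))) n + pow_n z (S n) * RtoC (b (S n)))%C <= sum_n (fun k => b k * r ^ k) n + b (S n) * r ^ S n).
        eapply Rle_trans. apply Cmod_triangle.
        rewrite Cmod_mult, Cmod_pow_n, Cmod_R, Hz, Rabs_pos_eq; auto. lra. }
    assert (Hlim : filterlim (fun n => Cmod (P n)) eventually (locally (Cmod l))).
    { assert (Hn : filterlim (fun x : C => Cmod x) (locally l) (locally (Cmod l))).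
      { exact (filterlim_norm (K:=C_AbsRing) (V:=C_NormedModule) l). }
      eapply filterlim_comp. exact Hl. exact Hn. }
    assert (Bd : forall n, Cmod (P n) <= Sj b 0 r).
    { intro n. eapply Rle_trans. apply HP. apply (is_lim_seq_incr_compare _ _ Sr). intro m. rewrite sum_Sn.
      change (sum_n (fun k => b k * r ^ k) m <= sum_n (fun k => b k * r ^ k) m + b (S m) * r ^ S m).
      assert (0 <= b (S m) * r ^ S m) by (apply Rmult_le_pos; auto; apply pow_le; auto). lra. }
    pose proof (filterlim_le (F := eventually) (fun n => Cmod (P n)) (fun _ => Sj b 0 r) (Cmod l) (Sj b 0 r)) as FL.
    simpl in FL. apply FL. exists 0%nat. intros; apply Bd. exact Hlim. apply filterlim_const.
  - intros u Hu. apply Hu. exists (RtoC r), (RtoC (Sj b 0 r)). split; [rewrite Cmod_R, Rabs_pos_eq; auto|].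
    split; [|rewrite Cmod_R, Rabs_pos_eq; auto].
    unfold is_pseries. eapply is_series_ext; [|apply (RtoC_series _ _ Sr)].
    intro n. rewrite pow_n_RtoC. change (RtoC (b n * r ^ n) = (RtoC (r ^ n) * RtoC (b n))%C).
    rewrite <- RtoC_mult. f_equal. ring.
Qed.

Definition gs (t : R) := exp (- t ^ 2 / 2).
Definition Ig (x : R) := RInt gs 0 x.
Definition kf (x u : R) := exp (- (x ^ 2 * (1 + u ^ 2)) / 2) / (1 + u ^ 2).
Definition Kf (x : R) := RInt (kf x) 0 1.

Lemma gs_derive x : is_derive gs x (- x * gs x).
Proof. unfold gs. auto_derive; auto. replace (- (x * (x * 1)) * / 2) with (- x ^ 2 / 2) by (simpl; field). field. Qed.

Lemma gs_cont x : continuous gs x.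
Proof. apply (ex_derive_continuous (K:=R_AbsRing) (V:=R_NormedModule)). eexists. apply gs_derive. Qed.

Lemma gs_pos x : 0 < gs x.
Proof. apply exp_pos. Qed.

Lemma ex_RInt_gs a b : ex_RInt gs a b.
Proof. apply (ex_RInt_continuous (V := R_CompleteNormedModule)). intros; apply gs_cont. Qed.

Lemma Ig_derive x : is_derive Ig x (gs x).
Proof.
  apply is_derive_RInt with (a := 0). 
  apply filter_forall. intro y. apply (RInt_correct (V := R_CompleteNormedModule)), ex_RInt_gs.
  apply gs_cont.
Qed.

Lemma deriv0_const (f : R -> R) : (forall x, is_derive f x 0) -> forall x, f x = f 0.
Proof.
  intros H x. pose proof (is_RInt_derive f (fun _ => 0) 0 x (fun y _ => H y)) as P.
  assert (P2 : is_RInt (fun _ : R => 0) 0 x (minus (f x) (f 0))).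
  { apply P. intros; apply continuous_const. }
  apply (is_RInt_unique (V := R_CompleteNormedModule)) in P2. rewrite (RInt_const (V := R_CompleteNormedModule)) in P2.
  unfold scal, minus, plus, opp in P2; simpl in P2. unfold mult in P2; simpl in P2. 
  rewrite Rmult_0_r in P2. lra.
Qed.

Lemma is_derive_val (f : R -> R) x l l' : is_derive f x l -> l = l' -> is_derive f x l'.
Proof. intros H E; subst; auto. Qed.

Lemma gs_even y : gs (- y) = gs y.
Proof. unfold gs. replace ((-y)^2) with (y^2) by ring. reflexivity. Qed.

Lemma Ig_odd x : Ig (- x) = - Ig x.
Proof.
  assert (H : forall y, is_derive (fun y => Ig (- y) + Ig y) y 0).
  { intro y.
    assert (D1 : is_derive (fun y => Ig (- y)) y (-1 * gs (-y))).
    { apply (is_derive_comp Ig (fun y => -y) y (gs (-y)) (-1)). apply Ig_derive. auto_derive; auto; ring. }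
    pose proof (is_derive_plus _ _ y _ _ D1 (Ig_derive y)) as D.
    eapply is_derive_val. exact D. unfold plus; simpl. rewrite gs_even. ring. }
  pose proof (deriv0_const _ H x) as E. simpl in E.
  replace (-0) with 0 in E by ring. unfold Ig in *. rewrite RInt_point in E.
  unfold zero in E; simpl in E. lra.
Qed.

Lemma kf_derive x u : is_derive (fun z => kf z u) x (- x * exp (- (x ^ 2 * (1 + u ^ 2)) / 2)).
Proof.
  unfold kf. auto_derive.
  - assert (0 < 1 + u * (u * 1)) by nra. lra.
  - match goal with |- context [exp ?a] => replace (exp a) with (exp (- (x ^ 2 * (1 + u ^ 2)) / 2)) by (f_equal; simpl; field) end.
    field. assert (0 < 1 + u * (u * 1)) by nra. lra.
Qed.

Lemma kf_Derive x u : Derive (fun z => kf z u) x = - x * exp (- (x ^ 2 * (1 + u ^ 2)) / 2).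
Proof. apply is_derive_unique, kf_derive. Qed.

Lemma kf_cont_u x u : continuous (kf x) u.
Proof.
  apply (ex_derive_continuous (K:=R_AbsRing) (V:=R_NormedModule)). unfold kf. auto_derive.
  assert (0 < 1 + u * (u * 1)) by nra. lra.
Qed.

Lemma ex_RInt_kf x a b : ex_RInt (kf x) a b.
Proof. apply (ex_RInt_continuous (V := R_CompleteNormedModule)). intros; apply kf_cont_u. Qed.

Lemma cont2d_dk x t : continuity_2d_pt (fun u v => Derive (fun z => kf z v) u) x t.
Proof.
  apply continuity_2d_pt_ext with (f := fun u v => - (u) * exp (- / 2 * ((u * u) * (1 + v * v)))).
  { intros u v. rewrite kf_Derive. f_equal. f_equal. simpl. field. }
  apply continuity_2d_pt_mult.
  apply continuity_2d_pt_opp, continuity_2d_pt_id1.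
  apply continuity_1d_2d_pt_comp with (f := exp).
  apply derivable_continuous_pt, derivable_pt_exp.
  apply continuity_2d_pt_mult. apply continuity_2d_pt_const.
  apply continuity_2d_pt_mult. apply continuity_2d_pt_mult; apply continuity_2d_pt_id1.
  apply continuity_2d_pt_plus. apply continuity_2d_pt_const.
  apply continuity_2d_pt_mult; apply continuity_2d_pt_id2.
Qed.

Lemma Kf_derive x : is_derive Kf x (- gs x * Ig x).
Proof.
  unfold Kf.
  assert (D := is_derive_RInt_param kf 0 1 x).
  eapply is_derive_val. apply D.
  - apply filter_forall. intros y t _. eexists. apply kf_derive.
  - intros t _. apply cont2d_dk.
  - apply filter_forall. intro y. apply ex_RInt_kf.
  - rewrite (RInt_ext (V := R_CompleteNormedModule) _ (fun u => scal (- gs x) (scal x (gs (x * u + 0))))).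
    2: { intros u _. rewrite kf_Derive.
         change (scal (- gs x) (scal x (gs (x * u + 0)))) with (- gs x * (x * gs (x * u + 0))).
         unfold gs. rewrite Rplus_0_r.
         assert (E : exp (- (x ^ 2 * (1 + u ^ 2)) / 2) = exp (- x ^ 2 / 2) * exp (- (x * u) ^ 2 / 2)).
         { rewrite <- exp_plus. f_equal. field. }
         rewrite E. match goal with |- ?a = ?b => change (@eq R a b) end. ring. }
    rewrite (RInt_scal (V := R_CompleteNormedModule)).
    rewrite (RInt_comp_lin (V := R_CompleteNormedModule)).
    unfold Ig. rewrite Rmult_0_r, Rplus_0_r, Rmult_1_r, Rplus_0_r. reflexivity.
    apply ex_RInt_gs.
    apply (ex_RInt_continuous (V := R_CompleteNormedModule)). intros z _.
    apply (ex_derive_continuous (K:=R_AbsRing) (V:=R_NormedModule)). unfold scal; simpl; unfold mult; simpl.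
    unfold gs. auto_derive. auto.
Qed.

Definition hf x := Ig x ^ 2 + 2 * Kf x.

Lemma hf_const x : hf x = hf 0.
Proof.
  apply deriv0_const. intro y. unfold hf.
  eapply is_derive_val.
  apply (is_derive_plus (fun y => Ig y ^ 2) (fun y => 2 * Kf y)).
  apply (is_derive_pow Ig 2 y (gs y)). apply Ig_derive.
  apply is_derive_scal. apply Kf_derive.
  unfold plus; simpl. ring.
Qed.
Ltac toR := match goal with |- ?a = ?b => change (@eq R a b) end.

Lemma Kf0 : Kf 0 = PI / 4.
Proof.
  unfold Kf. rewrite (RInt_ext (V := R_CompleteNormedModule) _ (fun u => / (1 + u ^ 2))).
  2: { intros u _. unfold kf. replace (- (0 ^ 2 * (1 + u ^ 2)) / 2) with 0 by (simpl; field). rewrite exp_0. toR. field.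
       assert (0 <= u ^ 2) by (apply pow2_ge_0). lra. }
  apply (is_RInt_unique (V := R_CompleteNormedModule)).
  replace (PI / 4) with (minus (atan 1) (atan 0)).
  2: { rewrite atan_1, atan_0. unfold minus, plus, opp; simpl. ring. }
  apply (is_RInt_derive (V := R_CompleteNormedModule)).
  - intros u _. apply is_derive_Reals, derivable_pt_lim_atan.
  - intros u _. apply (ex_derive_continuous (K:=R_AbsRing) (V:=R_NormedModule)). auto_derive.
    assert (0 <= u * (u * 1)) by nra. lra.
Qed.

Lemma hf_val x : Ig x ^ 2 + 2 * Kf x = PI / 2.
Proof.
  change (hf x = PI / 2). rewrite hf_const. unfold hf. rewrite Kf0. unfold Ig. rewrite RInt_point.
  change (@zero R_CompleteNormedModule) with 0. field.
Qed.

Lemma Kf_bounds x : 0 <= Kf x <= gs x.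
Proof.
  unfold Kf. split.
  - apply Rle_trans with (RInt (fun _ => 0) 0 1).
    { right. rewrite (RInt_const (V := R_CompleteNormedModule)). change (0 = scal (1 - 0) 0). unfold scal; simpl; unfold mult; simpl. ring. }
    apply RInt_le. lra. apply (ex_RInt_continuous (V := R_CompleteNormedModule)). intros; apply continuous_const.
    apply ex_RInt_kf.
    intros u _. unfold kf. apply Rlt_le, Rdiv_lt_0_compat. apply exp_pos. assert (0 <= u ^ 2) by (apply pow2_ge_0). lra.
  - apply Rle_trans with (RInt (fun _ => gs x) 0 1).
    2: { right. rewrite (RInt_const (V := R_CompleteNormedModule)). change (scal (1 - 0) (gs x) = gs x). unfold scal; simpl; unfold mult; simpl. ring. }
    apply RInt_le. lra. apply ex_RInt_kf. apply (ex_RInt_continuous (V := R_CompleteNormedModule)). intros; apply continuous_const.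
    intros u _. unfold kf, gs. assert (0 <= u ^ 2) by (apply pow2_ge_0).
    assert (E : exp (- (x ^ 2 * (1 + u ^ 2)) / 2) <= exp (- x ^ 2 / 2)).
    { destruct (Rle_lt_or_eq_dec (- (x ^ 2 * (1 + u ^ 2)) / 2) (- x ^ 2 / 2)).
      assert (0 <= x ^ 2) by apply pow2_ge_0. nra. apply Rlt_le, exp_increasing; auto. rewrite e; lra. }
    assert (0 < exp (- (x ^ 2 * (1 + u ^ 2)) / 2)) by apply exp_pos.
    apply Rle_trans with (exp (- (x ^ 2 * (1 + u ^ 2)) / 2)); auto.
    unfold Rdiv at 1. rewrite <- (Rmult_1_r (exp (- (x ^ 2 * (1 + u ^ 2)) / 2))) at 2.
    apply Rmult_le_compat_l. lra. rewrite <- Rinv_1. apply Rinv_le_contravar; lra.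
Qed.

Lemma gs_lim : is_lim gs p_infty 0.
Proof.
  apply is_lim_le_le_loc with (f := fun _ => 0) (g := fun x => 2 / x).
  2: apply is_lim_const.
  2: apply lim_inv.
  exists 1. intros x Hx. split. apply Rlt_le, gs_pos.
  unfold gs. assert (E := exp_ineq1_le (x ^ 2 / 2)).
  replace (exp (- x ^ 2 / 2)) with (/ exp (x ^ 2 / 2)).
  2: { rewrite <- exp_Ropp. f_equal. field. }
  assert (x <= x ^ 2) by (simpl; nra).
  apply Rle_trans with (/ (1 + x ^ 2 / 2)).
  apply Rinv_le_contravar; auto. nra.
  replace (2 / x) with (/ (x / 2)) by (field; lra). apply Rinv_le_contravar; lra.
Qed.

Lemma Ig_nonneg x : 0 <= x -> 0 <= Ig x.
Proof.
  intro Hx. unfold Ig. apply Rle_trans with (RInt (fun _ => 0) 0 x).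
  { right. rewrite (RInt_const (V := R_CompleteNormedModule)). change (0 = scal (x - 0) 0). unfold scal; simpl; unfold mult; simpl. ring. }
  apply RInt_le; auto. apply (ex_RInt_continuous (V := R_CompleteNormedModule)). intros; apply continuous_const.
  apply ex_RInt_gs. intros; apply Rlt_le, gs_pos.
Qed.

Lemma Kf_lim : is_lim Kf p_infty 0.
Proof.
  apply is_lim_le_le_loc with (f := fun _ => 0) (g := gs).
  exists 0. intros; apply Kf_bounds. apply is_lim_const. apply gs_lim.
Qed.

Lemma Ig_lim : is_lim Ig p_infty (sqrt (PI / 2)).
Proof.
  assert (L1 : is_lim (fun x => PI / 2 + (-2) * Kf x) p_infty (PI / 2)).
  { pose proof (is_lim_plus _ _ p_infty (PI / 2) (Rbar_mult (-2) 0) (PI / 2) (is_lim_const (PI / 2) p_infty) (is_lim_scal_l _ (-2) _ _ Kf_lim)) as L.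
    apply L. simpl. unfold is_Rbar_plus; simpl. f_equal. f_equal. ring. }
  assert (L2 : is_lim (fun x => sqrt (PI / 2 + (-2) * Kf x)) p_infty (sqrt (PI / 2))).
  { unfold is_lim in *. eapply filterlim_comp. exact L1.
    apply continuity_pt_filterlim, continuity_pt_sqrt. pose proof PI_RGT_0. lra. }
  eapply is_lim_ext_loc; [|exact L2]. exists 0. intros x Hx.
  pose proof (hf_val x) as H. replace (PI / 2 + -2 * Kf x) with (Ig x ^ 2) by lra.
  apply sqrt_pow2, Ig_nonneg. lra.
Qed.

Definition Phi x := Ig x / sqrt (2 * PI).

Lemma sqrt_ratio : sqrt (PI / 2) / sqrt (2 * PI) = 1 / 2.
Proof.
  pose proof PI_RGT_0.
  rewrite sqrt_div by lra. rewrite sqrt_mult by lra.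
  assert (s2 : sqrt 2 * sqrt 2 = 2) by (apply sqrt_sqrt; lra).
  assert (0 < sqrt 2) by (apply sqrt_lt_R0; lra). assert (0 < sqrt PI) by (apply sqrt_lt_R0; lra).
  unfold Rdiv. rewrite Rinv_mult. replace (sqrt PI * / sqrt 2 * (/ sqrt 2 * / sqrt PI)) with (/ (sqrt 2 * sqrt 2)) by (field; lra). rewrite s2. field.
Qed.

Lemma Phi_lim_p : is_lim Phi p_infty (1 / 2).
Proof.
  pose proof (is_lim_scal_l _ (/ sqrt (2 * PI)) _ _ Ig_lim) as L. simpl in L.
  eapply is_lim_ext; [|replace (1/2) with (/ sqrt (2 * PI) * sqrt (PI / 2)); [exact L|]].
  intro y. unfold Phi. unfold Rdiv. ring.
  rewrite <- sqrt_ratio. unfold Rdiv. ring.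
Qed.

Lemma Phi_lim_m : is_lim Phi m_infty (- (1 / 2)).
Proof.
  assert (L : is_lim (fun x => Phi (- x)) m_infty (1 / 2)).
  { apply (is_lim_comp Phi (fun x => - x) m_infty (1 / 2) p_infty Phi_lim_p).
    pose proof (is_lim_opp _ _ _ (is_lim_id m_infty)) as L. simpl in L. exact L.
    exists 0. intros; discriminate. }
  pose proof (is_lim_opp _ _ _ L) as L2. simpl in L2.
  eapply is_lim_ext; [|exact L2]. intro y. unfold Phi. rewrite Ig_odd. unfold Rdiv. ring.
Qed.

Lemma Phi_derive x : is_derive Phi x (std_normal_density x).
Proof.
  apply is_derive_ext with (f := fun x => / sqrt (2 * PI) * Ig x).
  { intro y. unfold Phi. unfold Rdiv. toR. ring. }
  eapply is_derive_val. apply is_derive_scal. apply Ig_derive.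
  unfold std_normal_density, gs. unfold Rdiv. toR. ring.
Qed.

Lemma snd_cont x : continuous std_normal_density x.
Proof.
  apply continuous_ext with (f := fun x => / sqrt (2 * PI) * gs x).
  { intro y. unfold std_normal_density, gs. unfold Rdiv. toR. ring. }
  apply (ex_derive_continuous (K:=R_AbsRing) (V:=R_NormedModule)). eexists.
  apply is_derive_scal. apply gs_derive.
Qed.

Lemma gauss_total : is_RInt_gen std_normal_density (Rbar_locally m_infty) (Rbar_locally p_infty) 1.
Proof.
  assert (D : forall x, Derive Phi x = std_normal_density x) by (intro; apply is_derive_unique, Phi_derive).
  pose proof (is_RInt_gen_Derive (Fa := Rbar_locally m_infty) (Fb := Rbar_locally p_infty) Phi (- (1/2)) (1/2)) as G.
  replace 1 with (1 / 2 - - (1 / 2)) by field.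
  eapply is_RInt_gen_ext; [| apply G].
  - apply filter_forall. intros ab y _. apply D.
  - apply filter_forall. intros ab y _. eexists; apply Phi_derive.
  - apply filter_forall. intros ab y _. apply continuous_ext with (f := std_normal_density).
    intro; rewrite D; auto. apply snd_cont.
  - exact Phi_lim_m.
  - exact Phi_lim_p.
Qed.



Lemma exp_INR_mult n z : exp (INR n * z) = exp z ^ n.
Proof.
  induction n. simpl. rewrite Rmult_0_l, exp_0. auto.
  rewrite S_INR. replace ((INR n + 1) * z) with (INR n * z + z) by ring.
  rewrite exp_plus, IHn. simpl. ring.
Qed.

Lemma exp_ge_pow n y : (1 <= n)%nat -> 0 <= y -> (y / INR n) ^ n <= exp y.
Proof.
  intros Hn Hy. assert (0 < INR n) by (apply lt_0_INR; lia).
  replace y with (INR n * (y / INR n)) at 2 by (field; lra).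
  rewrite exp_INR_mult. apply pow_incr. split. apply Rdiv_le_0_compat; lra.
  pose proof (exp_ineq1_le (y / INR n)). assert (0 <= y / INR n) by (apply Rdiv_le_0_compat; lra). lra.
Qed.

Lemma xk_gs_lim_p k : is_lim (fun x => x ^ k * gs x) p_infty 0.
Proof.
  set (n := S k). set (c := (2 * INR n) ^ n).
  apply is_lim_le_le_loc with (f := fun _ => 0) (g := fun x => c / x).
  2: apply is_lim_const. 2: apply lim_inv.
  exists 1. intros x Hx.
  assert (xk : 0 <= x ^ k) by (apply pow_le; lra).
  assert (gp := gs_pos x).
  split. nra.
  assert (Hn : 0 < INR n) by (apply lt_0_INR; unfold n; lia).
  assert (E := exp_ge_pow n (x ^ 2 / 2) ltac:(unfold n; lia) ltac:(assert (0 <= x^2) by apply pow2_ge_0; lra)).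
  assert (gsE : gs x = / exp (x ^ 2 / 2)) by (unfold gs; rewrite <- exp_Ropp; f_equal; field).
  assert (cp : 0 < c) by (apply pow_lt; lra).
  assert (E2 : (x ^ 2 / 2 / INR n) ^ n = x ^ (2 * n) / c).
  { replace (x ^ 2 / 2 / INR n) with (x ^ 2 * / (2 * INR n)) by (field; lra).
    rewrite Rpow_mult_distr, pow_inv, <- pow_mult. unfold c, Rdiv. reflexivity. }
  rewrite E2 in E.
  assert (x2n : 0 < x ^ (2 * n)) by (apply pow_lt; lra).
  rewrite gsE.
  apply Rle_trans with (x ^ k * / (x ^ (2 * n) / c)).
  { apply Rmult_le_compat_l; auto. apply Rinv_le_contravar; auto. apply Rdiv_lt_0_compat; auto. }
  replace (x ^ k * / (x ^ (2 * n) / c)) with (c / x ^ (k + 2)).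
  2: { replace (2 * n)%nat with (k + 2 + k)%nat by (unfold n; lia). rewrite !pow_add. field.
       repeat split; try apply pow_nonzero; lra. }
  unfold Rdiv. apply Rmult_le_compat_l; [lra|]. apply Rinv_le_contravar; [lra|].
  apply pow_ge_self; [lra|lia].
Qed.

Lemma xk_gs_lim_m k : is_lim (fun x => x ^ k * gs x) m_infty 0.
Proof.
  assert (L : is_lim (fun x => (- x) ^ k * gs (- x)) m_infty 0).
  { apply (is_lim_comp (fun x => x ^ k * gs x) (fun x => - x) m_infty 0 p_infty (xk_gs_lim_p k)).
    pose proof (is_lim_opp _ _ _ (is_lim_id m_infty)) as L. simpl in L. exact L.
    exists 0. intros; discriminate. }
  pose proof (is_lim_scal_l _ ((-1) ^ k) _ _ L) as L2. simpl in L2. rewrite Rmult_0_r in L2.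
  eapply is_lim_ext; [|exact L2]. intro y. cbv beta. rewrite gs_even.
  replace (- y) with ((-1) * y) by ring. rewrite Rpow_mult_distr.
  replace ((-1) ^ k * ((-1) ^ k * y ^ k * gs y)) with (((-1) ^ k * (-1) ^ k) * (y ^ k * gs y)) by ring.
  rewrite <- Rpow_mult_distr. replace (-1 * -1) with 1 by ring. rewrite pow1. ring.
Qed.

Definition Fm (m : nat) (x : R) := x ^ m * std_normal_density x.

Lemma Fm_lim_p m : is_lim (Fm m) p_infty 0.
Proof.
  pose proof (is_lim_scal_l _ (/ sqrt (2 * PI)) _ _ (xk_gs_lim_p m)) as L. simpl in L. rewrite Rmult_0_r in L.
  eapply is_lim_ext; [|exact L]. intro y. unfold Fm, std_normal_density, gs. unfold Rdiv. ring.
Qed.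

Lemma Fm_lim_m m : is_lim (Fm m) m_infty 0.
Proof.
  pose proof (is_lim_scal_l _ (/ sqrt (2 * PI)) _ _ (xk_gs_lim_m m)) as L. simpl in L. rewrite Rmult_0_r in L.
  eapply is_lim_ext; [|exact L]. intro y. unfold Fm, std_normal_density, gs. unfold Rdiv. ring.
Qed.

Lemma snd_derive x : is_derive std_normal_density x (- x * std_normal_density x).
Proof.
  apply is_derive_ext with (f := fun x => / sqrt (2 * PI) * gs x).
  { intro y. unfold std_normal_density, gs. unfold Rdiv. toR. ring. }
  eapply is_derive_val. apply is_derive_scal. apply gs_derive.
  unfold std_normal_density, gs. unfold Rdiv. toR. ring.
Qed.

Lemma Fm_derive m x : is_derive (Fm (S m)) x (INR (S m) * Fm m x - Fm (S (S m)) x).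
Proof.
  unfold Fm. eapply is_derive_val. apply is_derive_mult_R.
  apply (is_derive_pow (fun x => x) (S m) x 1). apply (is_derive_id (K:=R_AbsRing)).
  apply snd_derive.
  simpl pred. toR. simpl. ring.
Qed.

Lemma Fm_cont m x : continuous (Fm m) x.
Proof.
  unfold Fm. apply (ex_derive_continuous (K:=R_AbsRing) (V:=R_NormedModule)). eexists.
  apply is_derive_mult_R. apply (is_derive_pow (fun x => x) m x 1). apply (is_derive_id (K:=R_AbsRing)).
  apply snd_derive.
Qed.

Lemma RInt_gen_Fm_derive m : is_RInt_gen (fun x => INR (S m) * Fm m x - Fm (S (S m)) x)
   (Rbar_locally m_infty) (Rbar_locally p_infty) 0.
Proof.
  assert (D : forall x, Derive (Fm (S m)) x = INR (S m) * Fm m x - Fm (S (S m)) x)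
    by (intro; apply is_derive_unique, Fm_derive).
  pose proof (is_RInt_gen_Derive (Fa := Rbar_locally m_infty) (Fb := Rbar_locally p_infty) (Fm (S m)) 0 0) as G.
  replace 0 with (0 - 0) by ring.
  eapply is_RInt_gen_ext; [| apply G].
  - apply filter_forall. intros ab y _. apply D.
  - apply filter_forall. intros ab y _. eexists; apply Fm_derive.
  - apply filter_forall. intros ab y _. eapply continuous_ext. intro z. symmetry. apply D.
    apply (continuous_minus (fun x => INR (S m) * Fm m x) (Fm (S (S m)))).
    apply (continuous_scal_r (INR (S m)) (Fm m)). apply Fm_cont. apply Fm_cont.
  - exact (Fm_lim_m (S m)).
  - exact (Fm_lim_p (S m)).
Qed.

Lemma Fm0_derive x : is_derive (Fm 0) x (- Fm 1 x).
Proof.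
  apply is_derive_ext with (f := std_normal_density).
  { intro y. unfold Fm. simpl. toR. ring. }
  eapply is_derive_val. apply snd_derive. unfold Fm. simpl. ring.
Qed.

Lemma gauss_moments_pair k :
  is_RInt_gen (Fm k) (Rbar_locally m_infty) (Rbar_locally p_infty) (gm k) /\
  is_RInt_gen (Fm (S k)) (Rbar_locally m_infty) (Rbar_locally p_infty) (gm (S k)).
Proof.
  induction k.
  - split.
    + eapply is_RInt_gen_ext; [|apply gauss_total]. apply filter_forall. intros ab y _.
      unfold Fm. simpl. toR. ring.
    + assert (D : forall x, Derive (Fm 0) x = - Fm 1 x) by (intro; apply is_derive_unique, Fm0_derive).
      pose proof (is_RInt_gen_Derive (Fa := Rbar_locally m_infty) (Fb := Rbar_locally p_infty) (Fm 0) 0 0) as G.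
      assert (G2 : is_RInt_gen (Derive (Fm 0)) (Rbar_locally m_infty) (Rbar_locally p_infty) (0 - 0)).
      { apply G.
        - apply filter_forall. intros ab y _. eexists; apply Fm0_derive.
        - apply filter_forall. intros ab y _. eapply continuous_ext. intro z. symmetry. apply D.
          apply (continuous_opp (Fm 1)). apply Fm_cont.
        - exact (Fm_lim_m 0).
        - exact (Fm_lim_p 0). }
      pose proof (is_RInt_gen_opp _ _ G2) as G3.
      simpl gm. replace 0 with (opp (0 - 0)) by (unfold opp; simpl; ring).
      eapply is_RInt_gen_ext; [|exact G3]. apply filter_forall. intros ab y _.
      rewrite D. unfold opp; simpl. toR. ring.
  - destruct IHk as [I0 I1]. split; auto.
    pose proof (is_RInt_gen_minus _ _ _ _ (is_RInt_gen_scal _ (INR (S k)) _ I0) (RInt_gen_Fm_derive k)) as G.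
    replace (gm (S (S k))) with (minus (scal (INR (S k)) (gm k)) 0).
    2: { change (gm (S (S k))) with (INR (S k) * gm k). unfold minus, plus, opp, scal; simpl. unfold mult; simpl. ring. }
    eapply is_RInt_gen_ext; [|exact G]. apply filter_forall. intros ab y _.
    unfold minus, plus, opp, scal; simpl. unfold mult; simpl. toR. ring.
Qed.

Lemma gauss_moments m : is_RInt_gen (fun x => x ^ m * std_normal_density x)
   (Rbar_locally m_infty) (Rbar_locally p_infty) (gm m).
Proof. exact (proj1 (gauss_moments_pair m)). Qed.


Lemma GB_of_fo b : CV_radius b = p_infty -> (forall n, 0 <= b n) -> finite_order b ->
  exists (k : nat) R1, forall r, R1 <= r -> Sj b 0 r <= exp (r ^ k).
Proof.
  intros Rb bnn (K & R0 & HR0 & H).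
  assert (HK := nat_up (Rabs K) (Rabs_pos K)).
  set (k := Z.to_nat (up (Rabs K))) in *.
  exists k, (R0 + 3). intros r Hr.
  assert (r0 : 0 <= r) by lra.
  assert (Hrk : 0 <= r ^ k) by (apply pow_le; lra).
  destruct (Rle_lt_dec (Sj b 0 r) 1) as [G1|G1].
  { apply Rle_trans with 1; auto. rewrite <- exp_0. apply exp_le_mono. auto. }
  specialize (H r ltac:(lra)). rewrite maxmod_eq in H; auto.
  assert (lnr : 0 < ln r). { rewrite <- ln_1. apply ln_increasing; lra. }
  assert (lnG : 0 < ln (Sj b 0 r)). { rewrite <- ln_1. apply ln_increasing; lra. }
  assert (H2 : ln (ln (Sj b 0 r)) <= K * ln r).
  { apply (Rmult_le_compat_r (ln r)) in H; [|lra]. unfold Rdiv in H.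
    rewrite Rmult_assoc, Rinv_l in H; lra. }
  assert (H3 : K * ln r <= ln (r ^ k)).
  { rewrite ln_pow by lra. apply Rmult_le_compat_r; [lra|]. pose proof (Rle_abs K). lra. }
  assert (H4 : ln (Sj b 0 r) <= r ^ k).
  { rewrite <- (exp_ln (ln (Sj b 0 r))) by auto. rewrite <- (exp_ln (r ^ k)) by (apply pow_lt; lra).
    apply exp_le_mono. lra. }
  rewrite <- (exp_ln (Sj b 0 r)) by lra. apply exp_le_mono. auto.
Qed.

Lemma KL b n0 k R1 : CV_radius b = p_infty -> (forall n, 0 <= b n) -> (1 <= n0)%nat -> b n0 <> 0 ->
  (forall r, R1 <= r -> Sj b 0 r <= exp (r ^ k)) ->
  forall j, (3 <= j)%nat -> is_lim (fun t => Sj b j t / sqrt (Sj b 2 t) ^ j) p_infty 0.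
Proof.
  intros Rb bnn Hn0 Hb0 HG j Hj.
  destruct (classic (exists n, (2 * k + 2 <= n)%nat /\ b n <> 0)) as [[n1 [H1 H2]]|Hn].
  - eapply KL_trans; eauto.
  - apply (KL_poly b j (2 * k + 1) n0); auto.
    intros n Hn'. apply NNPP. intro Hne. apply Hn. exists n. split; auto. lia.
Qed.

Lemma G2_pos b n0 t : CV_radius b = p_infty -> (forall n, 0 <= b n) -> (1 <= n0)%nat -> b n0 <> 0 ->
  0 < t -> 0 < Sj b 2 t.
Proof.
  intros Rb bnn Hn0 Hb0 Ht. apply Rlt_le_trans with (INR n0 ^ 2 * b n0 * t ^ n0).
  - assert (0 < b n0) by (pose proof (bnn n0); lra).
    assert (0 < INR n0) by (apply lt_0_INR; lia).
    assert (0 < t ^ n0) by (apply pow_lt; lra).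
    apply Rmult_lt_0_compat; auto. apply Rmult_lt_0_compat; auto. apply pow_lt; auto.
  - apply G_term_le; auto.
Qed.

Theorem proposition4p11 (b a : nat -> R) :
  (* g = sum_n b_n z^n is entire *)
  CV_radius b = p_infty ->
  (* non-negative Taylor coefficients *)
  (forall n, 0 <= b n) ->
  (* g is non-constant *)
  (exists n, (1 <= n)%nat /\ b n <> 0) ->
  (* g has finite order *)
  finite_order b ->
  (* f = e^g = sum_n a_n z^n *)
  (forall x : R, is_pseries a x (exp (PSeries b x))) ->
  forall m : nat, (1 <= m)%nat ->
    exists EZm : R,
      is_RInt_gen (fun x => x ^ m * std_normal_density x)
        (Rbar_locally m_infty) (Rbar_locally p_infty) EZm /\
      is_lim (fun t => knorm_moment a t m) p_infty EZm.
Proof.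
  intros Rb bnn [n0 [Hn0 Hb0]] fo Hps m Hm.
  assert (Ra : CV_radius a = p_infty).
  { apply radius_inf_of_ex. intro x. eexists. apply Hps. }
  assert (Hab : forall t, Sj a 0 t = exp (Sj b 0 t)).
  { intro t. rewrite <- !PSeries_Sj0. apply is_pseries_unique. apply Hps. }
  destruct (GB_of_fo b Rb bnn fo) as (k & R1 & HG).
  exists (gm m). split.
  - apply gauss_moments.
  - assert (Hp : forall t, 0 < t -> 0 < Sj b 2 t) by (intros t Ht; exact (G2_pos b n0 t Rb bnn Hn0 Hb0 Ht)).
    pose proof (Iso_lim b m (gm m) (mu a b m) Hp (KL b n0 k R1 Rb bnn Hn0 Hb0 HG)
                  (proj1 (mu_Iso a b Ra Rb Hab m))) as L.
    eapply is_lim_ext_pos; [|exact L]. intros t Ht. symmetry. apply knorm_eq; auto.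
Qed.
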